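(* Consider a population model with two biallelic causal variants (alleles $A_1,A_2$ and $B_1,B_2$) and a biallelic marker (alleles $M_1,M_2$), with ordered genotypes, in which the marker is in linkage disequilibrium with the first causal variant and in linkage equilibrium with the second causal variant, and Hardy–Weinberg equilibrium holds. Let $\pi\in(0,1)$ be the probability that a random individual is a case and $\pi_{kl}$ the probability of being a case given ordered genotype $(A_k,A_l)$ at the first causal variant, with $\pi_{12}=\pi_{21}$. Then \[ \frac{q_1^U-q_1^A}{\sqrt{q_1q_2}} \;=\; \Delta\,\frac{p_1^U-p_1^A}{\sqrt{p_1p_2}}, \qquad \Delta:=\frac{D_{11}}{\sqrt{p_1p_2q_1q_2}},\quad D_{11}=\mathrm{P}(A_1M_1)-p_1q_1 . \]
   Context: A random individual is drawn from a population. Each individual carries two ordered haplotypes, and at each of three loci (first causal variant with alleles $A_1,A_2$; second causal variant with alleles $B_1,B_2$; marker with alleles $M_1,M_2$) has an ordered genotype. The individual is a case (event $A$) or a control (event $U$). $p_i\in(0,1)$, $q_k\in(0,1)$ are the population frequencies of alleles $A_i$ and $M_k$ ($p_2=1-p_1$, $q_2=1-q_1$), and $\mathrm{P}(A_1M_1)$ the population frequency of haplotype $(A_1,M_1)$. $q_1^A,q_1^U$ are the frequencies of allele $M_1$ among cases and among controls, and $p_1^A,p_1^U$ the frequencies of allele $A_1$ among cases and among controls (allele frequency among a group $=$ probability of homozygous genotype plus half the probabilities of the two ordered heterozygous genotypes, within that group). The marker is not causal: given the genotypes at the two causal variants, case/control status is independent of the marker genotype. Linkage equilibrium of the marker with the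 second causal variant means that, given the genotype at the first causal variant, the marker genotype is independent of the genotype at the second causal variant. Hardy–Weinberg equilibrium means the two haplotypes of an individual are independent. *)

(* Defs.v *)
From HB Require Import structures.
From mathcomp Require Import all_boot all_order all_algebra.
Set Implicit Arguments. Unset Strict Implicit. Unset Printing Implicit Defensive.
Import Order.TTheory GRing.Theory Num.Theory.
Local Open Scope ring_scope.

(* Alleles at a biallelic locus: ord0 stands for allele 1 (A_1, B_1, M_1),
   the other element of 'I_2 for allele 2. *)
Definition allele := 'I_2.
Definition al1 : allele := ord0.
Definition al2 : allele := ord_max.

Definition hap := (allele * allele * allele)%type.
Definition alA (h : hap) : allele := h.1.1.
Definition alB (h : hap) : allele := h.1.2.
Definition alM (h : hap) : allele := h.2.

Definition indiv := (hap * hap * bool)%type.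
Definition hap1 (w : indiv) : hap := w.1.1.
Definition hap2 (w : indiv) : hap := w.1.2.
Definition isCase (w : indiv) : bool := w.2.

Definition gA (w : indiv) : allele * allele := (alA (hap1 w), alA (hap2 w)).
Definition gB (w : indiv) : allele * allele := (alB (hap1 w), alB (hap2 w)).
Definition gM (w : indiv) : allele * allele := (alM (hap1 w), alM (hap2 w)).

Definition is_distr (R : numDomainType) (P : {ffun indiv -> R}) : Prop :=
  (forall w, 0 <= P w) /\ \sum_w P w = 1.

Definition Pr (R : numDomainType) (P : {ffun indiv -> R}) (E : pred indiv) : R :=
  \sum_(w | E w) P w.

Definition allele_freq_in (R : numFieldType) (P : {ffun indiv -> R})
    (E : pred indiv) (loc : hap -> allele) (a : allele) : R :=
  (Pr P (fun w => E w && (loc (hap1 w) == a) && (loc (hap2 w) == a))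
   + (Pr P (fun w => E w && (loc (hap1 w) == a) && (loc (hap2 w) != a))
      + Pr P (fun w => E w && (loc (hap1 w) != a) && (loc (hap2 w) == a))) / 2)
  / Pr P E.

(* Population haplotype frequency of (A = a, M = m): average of the
   frequencies on the two haplotype positions (which coincide under the
   identical-distribution hypothesis of the theorem). *)
Definition hapAM_freq (R : numFieldType) (P : {ffun indiv -> R})
    (a m : allele) : R :=
  (Pr P (fun w => (alA (hap1 w) == a) && (alM (hap1 w) == m))
   + Pr P (fun w => (alA (hap2 w) == a) && (alM (hap2 w) == m))) / 2.

Definition pi_geno (R : numFieldType) (P : {ffun indiv -> R}) (k l : allele) : R :=
  Pr P (fun w => isCase w && (gA w == (k, l))) / Pr P (fun w => gA w == (k, l)).

(* Main.v *)
Require Import Defs.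
From HB Require Import structures.
From mathcomp Require Import all_boot all_order all_algebra.
From mathcomp Require Import ring lra.
Import Order.TTheory GRing.Theory Num.Theory.
Set Implicit Arguments. Unset Strict Implicit.
Local Open Scope ring_scope.
Lemma Pr_ext (R : numDomainType) (P : {ffun indiv -> R}) (E F : pred indiv) :
  (forall w, E w = F w) -> Pr P E = Pr P F.
Proof. by move=> h; apply: eq_bigl. Qed.

Lemma Pr_split (R : numDomainType) (P : {ffun indiv -> R}) (E C : pred indiv) :
  Pr P E = Pr P (fun w => E w && C w) + Pr P (fun w => E w && ~~ C w).
Proof. by rewrite /Pr (bigID C). Qed.

Lemma Pr_sel (R : numDomainType) (P : {ffun indiv -> R}) (T : finType)
  (g : indiv -> T) (E : pred indiv) (S : pred T) :
  Pr P (fun w => E w && S (g w)) = \sum_(x | S x) Pr P (fun w => E w && (g w == x)).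
Proof.
rewrite /Pr (partition_big g S) //=; last by move=> i /andP[].
apply: eq_bigr => x Sx; apply: eq_bigl => w.
by case: (eqVneq (g w) x) => [->|]; rewrite ?Sx ?andbT ?andbF.
Qed.

Lemma Pr_part (R : numDomainType) (P : {ffun indiv -> R}) (T : finType)
  (g : indiv -> T) (E : pred indiv) :
  Pr P E = \sum_x Pr P (fun w => E w && (g w == x)).
Proof.
rewrite -(Pr_sel P g E predT); apply: Pr_ext => w; by rewrite andbT.
Qed.

Lemma Pr_ge0 (R : numDomainType) (P : {ffun indiv -> R}) E :
  (forall w, 0 <= P w) -> 0 <= Pr P E.
Proof. by move=> h; apply: sumr_ge0. Qed.

Lemma Pr_mono (R : numDomainType) (P : {ffun indiv -> R}) (E F : pred indiv) :
  (forall w, 0 <= P w) -> (forall w, E w -> F w) -> Pr P E <= Pr P F.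
Proof.
move=> h0 hEF; rewrite /Pr [leRHS](bigID E) /=.
rewrite [X in X <= _](eq_bigl (fun w => F w && E w)); last first.
  by move=> w; case Ew: (E w); rewrite ?andbT ?andbF ?hEF.
by rewrite lerDl sumr_ge0.
Qed.

Lemma Pr_hwe (R : numDomainType) (P : {ffun indiv -> R}) :
  (forall h h' : hap,
     Pr P (fun w => (hap1 w == h) && (hap2 w == h'))
     = Pr P (fun w => hap1 w == h) * Pr P (fun w => hap2 w == h')) ->
  forall S1 S2 : pred hap,
  Pr P (fun w => S1 (hap1 w) && S2 (hap2 w)) =
  Pr P (fun w => S1 (hap1 w)) * Pr P (fun w => S2 (hap2 w)).
Proof.
move=> HW S1 S2.
have e1 := Pr_sel P (fun w => (hap1 w, hap2 w)) (fun _ => true) (fun x => S1 x.1 && S2 x.2).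
rewrite (Pr_ext (F := fun w => true && (S1 (hap1 w) && S2 (hap2 w))) P) // e1 /=.
rewrite -(pair_big_dep S1 (fun _ => S2) (fun h h' => Pr P (fun w => (hap1 w, hap2 w) == (h, h')))) /=.
rewrite (Pr_ext (E := fun w => S1 (hap1 w)) (F := fun w => true && S1 (hap1 w)) P) // (Pr_ext (E := fun w => S2 (hap2 w)) (F := fun w => true && S2 (hap2 w)) P) //.
rewrite !Pr_sel big_distrlr /=; apply: eq_bigr => h _; apply: eq_bigr => h' _.
by rewrite -HW; apply: Pr_ext => w; rewrite xpair_eqE.
Qed.

Lemma Pr_marg (R : numDomainType) (P : {ffun indiv -> R}) :
  (forall h : hap, Pr P (fun w => hap1 w == h) = Pr P (fun w => hap2 w == h)) ->
  forall S : pred hap, Pr P (fun w => S (hap1 w)) = Pr P (fun w => S (hap2 w)).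
Proof.
move=> HI S.
rewrite (Pr_ext (E := fun w => S (hap1 w)) (F := fun w => true && S (hap1 w)) P) // (Pr_ext (E := fun w => S (hap2 w)) (F := fun w => true && S (hap2 w)) P) //.
rewrite !Pr_sel; apply: eq_bigr => h _; by rewrite -HI.
Qed.

Lemma keyalg (R : realFieldType) (K G Ec H u v F : R) :
  K * G = Ec * H -> H * (u * v) = G * (F * v) -> 0 < u -> 0 <= K -> K <= Ec ->
  Ec <= G -> Ec <= v -> K = Ec * (F / u).
Proof.
move=> e1 e2 hu hK hKE hEG hEv.
have hE : 0 <= Ec by apply: le_trans hKE.
have [v0|vn0] := eqVneq v 0.
  have E0 : Ec = 0 by apply/eqP; rewrite eq_le hE -v0 hEv.
  have K0 : K = 0 by apply/eqP; rewrite eq_le hK -E0 hKE.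
  by rewrite K0 E0 mul0r.
have un0 : u != 0 by rewrite gt_eqF.
have eH : H = G * F / u.
  apply: (mulIf (mulf_neq0 un0 vn0)); rewrite /= e2; field; exact: un0.
have [G0|Gn0] := eqVneq G 0.
  have E0 : Ec = 0 by apply/eqP; rewrite eq_le hE -G0 hEG.
  have K0 : K = 0 by apply/eqP; rewrite eq_le hK -E0 hKE.
  by rewrite K0 E0 mul0r.
apply: (mulIf Gn0); rewrite /= e1 eH; field; exact: un0.
Qed.


Lemma sum_allele (R : nmodType) (f : allele -> R) :
  \sum_(a : allele) f a = f al1 + f al2.
Proof.
rewrite /allele big_ord_recl big_ord_recl big_ord0 addr0 /al1 /al2.
by congr (_ + f _); apply: val_inj.
Qed.

Lemma allele_cases (a : allele) : a = al1 \/ a = al2.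
Proof.
case: a => [[|[|n]] Hn]; [left|right|by []]; by apply: val_inj.
Qed.

Lemma afreq (R : numFieldType) (P : {ffun indiv -> R}) (E : pred indiv)
  (loc : hap -> allele) (a : allele) :
  allele_freq_in P E loc a =
  (Pr P (fun w => E w && (loc (hap1 w) == a)) + Pr P (fun w => E w && (loc (hap2 w) == a))) / 2 / Pr P E.
Proof.
rewrite /allele_freq_in; congr (_ / _).
rewrite (Pr_split P (fun w => E w && (loc (hap1 w) == a)) (fun w => loc (hap2 w) == a)).
rewrite (Pr_split P (fun w => E w && (loc (hap2 w) == a)) (fun w => loc (hap1 w) == a)).
rewrite (Pr_ext (E := fun w => E w && (loc (hap2 w) == a) && (loc (hap1 w) == a))
                (F := fun w => E w && (loc (hap1 w) == a) && (loc (hap2 w) == a)) P); last first.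
  by move=> w; rewrite andbAC.
rewrite (Pr_ext (E := fun w => E w && (loc (hap2 w) == a) && ~~ (loc (hap1 w) == a))
                (F := fun w => E w && (loc (hap1 w) != a) && (loc (hap2 w) == a)) P); last first.
  by move=> w; rewrite andbAC.
field.
by [].
Qed.

Ltac bcase := rewrite ?eqb_id; repeat match goal with
   | |- context [isCase ?w] => case: (isCase w)
   | |- context [?x == ?y] => case: (x == y)
   end; try reflexivity.

Unset Implicit Arguments. Set Strict Implicit.

Theorem mainTheorem3 (R : rcfType) (P : {ffun indiv -> R}) :
  is_distr P ->
  (* Hardy-Weinberg equilibrium: the two haplotypes are independent *)
  (forall h h' : hap,
     Pr P (fun w => (hap1 w == h) && (hap2 w == h'))
     = Pr P (fun w => hap1 w == h) * Pr P (fun w => hap2 w == h')) ->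
  (* both haplotypes are drawn from the same population haplotype distribution *)
  (forall h : hap, Pr P (fun w => hap1 w == h) = Pr P (fun w => hap2 w == h)) ->
  (* the marker is not causal: given (gA, gB), status is independent of gM *)
  (forall (s : bool) (ga gb gm : allele * allele),
     Pr P (fun w => (isCase w == s) && (gA w == ga) && (gB w == gb) && (gM w == gm))
       * Pr P (fun w => (gA w == ga) && (gB w == gb))
     = Pr P (fun w => (isCase w == s) && (gA w == ga) && (gB w == gb))
       * Pr P (fun w => (gA w == ga) && (gB w == gb) && (gM w == gm))) ->
  (* linkage equilibrium of marker and second causal variant: given gA,
     gM is independent of gB *)
  (forall ga gb gm : allele * allele,
     Pr P (fun w => (gA w == ga) && (gB w == gb) && (gM w == gm))
       * Pr P (fun w => gA w == ga)
     = Pr P (fun w => (gA w == ga) && (gB w == gb))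
       * Pr P (fun w => (gA w == ga) && (gM w == gm))) ->
  (* pi = P(case) in (0,1) *)
  0 < Pr P isCase < 1 ->
  (* pi_12 = pi_21 *)
  pi_geno P al1 al2 = pi_geno P al2 al1 ->
  let p1 := allele_freq_in P predT alA al1 in
  let q1 := allele_freq_in P predT alM al1 in
  let p2 := 1 - p1 in
  let q2 := 1 - q1 in
  0 < p1 < 1 -> 0 < q1 < 1 ->
  let p1A := allele_freq_in P isCase alA al1 in
  let p1U := allele_freq_in P (predC isCase) alA al1 in
  let q1A := allele_freq_in P isCase alM al1 in
  let q1U := allele_freq_in P (predC isCase) alM al1 in
  let D11 := hapAM_freq P al1 al1 - p1 * q1 in
  let Delta := D11 / Num.sqrt (p1 * p2 * q1 * q2) in
  (q1U - q1A) / Num.sqrt (q1 * q2) = Delta * ((p1U - p1A) / Num.sqrt (p1 * p2)).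
Proof.
move=> [P0 P1] HW HI HNC HLE /andP[pc0 pc1] _ p1 q1 p2 q2 hp1 hq1 p1A p1U q1A q1U D11 Delta.
pose fA (a : allele) := Pr P (fun w => alA (hap1 w) == a).
pose F (a : allele) := Pr P (fun w => (alA (hap1 w) == a) && (alM (hap1 w) == al1)).
have hmA a : Pr P (fun w => alA (hap2 w) == a) = fA a.
  by rewrite /fA (Pr_marg HI (fun h => alA h == a)).
have hmF a : Pr P (fun w => (alA (hap2 w) == a) && (alM (hap2 w) == al1)) = F a.
  by rewrite /F (Pr_marg HI (fun h => (alA h == a) && (alM h == al1))).
have Ptot : Pr P predT = 1 by [].
have fAsum : fA al1 + fA al2 = 1.
  rewrite -Ptot (Pr_part P (fun w => alA (hap1 w)) predT) sum_allele.
  by congr (_ + _); apply: Pr_ext.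
have ep1 : p1 = fA al1.
  rewrite /p1 afreq Ptot (Pr_ext (E := fun w => predT w && (alA (hap1 w) == al1)) (F := fun w => alA (hap1 w) == al1) P) //.
  rewrite (Pr_ext (E := fun w => predT w && (alA (hap2 w) == al1)) (F := fun w => alA (hap2 w) == al1) P) // hmA.
  rewrite divr1 /fA; field. by [].
have fApos a : 0 < fA a.
  move: hp1; rewrite ep1 => /andP[h0 h1].
  have := fAsum; case: (allele_cases a) => -> ?; lra.
have K1 : forall (ga gb : allele * allele),
  Pr P (fun w => ((isCase w == true) && (gA w == ga) && (gB w == gb)) && ((gM w).1 == al1))
  = Pr P (fun w => (isCase w == true) && (gA w == ga) && (gB w == gb)) * (F ga.1 / fA ga.1).
  move=> [a a'] gb /=.
  apply: (keyalg (G := Pr P (fun w => (gA w == (a,a')) && (gB w == gb)))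
    (H := Pr P (fun w => ((gA w == (a,a')) && (gB w == gb)) && ((gM w).1 == al1))) (v := fA a')).
  - rewrite (Pr_sel P gM (fun w => (isCase w == true) && (gA w == (a,a')) && (gB w == gb)) (fun gm => gm.1 == al1)).
    rewrite (Pr_sel P gM (fun w => (gA w == (a,a')) && (gB w == gb)) (fun gm => gm.1 == al1)).
    rewrite mulr_suml mulr_sumr; apply: eq_bigr => gm _; exact: HNC.
  - have hPA : Pr P (fun w => gA w == (a,a')) = fA a * fA a'.
      rewrite (Pr_ext (F := fun w => (alA (hap1 w) == a) && (alA (hap2 w) == a')) P); last first.
        by move=> w; rewrite /gA xpair_eqE.
      by rewrite (Pr_hwe HW (fun h => alA h == a) (fun h => alA h == a')) hmA.
    have hX : Pr P (fun w => (gA w == (a,a')) && ((gM w).1 == al1)) = F a * fA a'.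
      rewrite (Pr_ext (F := fun w => ((alA (hap1 w) == a) && (alM (hap1 w) == al1)) && (alA (hap2 w) == a')) P); last first.
        by move=> w; rewrite /gA /gM xpair_eqE /=; bcase.
      by rewrite (Pr_hwe HW (fun h => (alA h == a) && (alM h == al1)) (fun h => alA h == a')) hmA.
    rewrite -hPA -hX.
    rewrite (Pr_sel P gM (fun w => (gA w == (a,a')) && (gB w == gb)) (fun gm => gm.1 == al1)).
    rewrite (Pr_sel P gM (fun w => (gA w == (a,a'))) (fun gm => gm.1 == al1)).
    rewrite mulr_suml mulr_sumr; apply: eq_bigr => gm _; exact: HLE.
  - exact: fApos.
  - exact: Pr_ge0.
  - by apply: Pr_mono => // w /andP[].
  - by apply: Pr_mono => // w /andP[/andP[_ ->] ->].
  - rewrite -hmA; apply: Pr_mono => // w /andP[/andP[_]].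
    by rewrite /gA xpair_eqE => /andP[_ ->].
have K2 : forall (ga gb : allele * allele),
  Pr P (fun w => ((isCase w == true) && (gA w == ga) && (gB w == gb)) && ((gM w).2 == al1))
  = Pr P (fun w => (isCase w == true) && (gA w == ga) && (gB w == gb)) * (F ga.2 / fA ga.2).
  move=> [a a'] gb /=.
  apply: (keyalg (G := Pr P (fun w => (gA w == (a,a')) && (gB w == gb)))
    (H := Pr P (fun w => ((gA w == (a,a')) && (gB w == gb)) && ((gM w).2 == al1))) (v := fA a)).
  - rewrite (Pr_sel P gM (fun w => (isCase w == true) && (gA w == (a,a')) && (gB w == gb)) (fun gm => gm.2 == al1)).
    rewrite (Pr_sel P gM (fun w => (gA w == (a,a')) && (gB w == gb)) (fun gm => gm.2 == al1)).
    rewrite mulr_suml mulr_sumr; apply: eq_bigr => gm _; exact: HNC.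
  - have hPA : Pr P (fun w => gA w == (a,a')) = fA a' * fA a.
      rewrite (Pr_ext (F := fun w => (alA (hap1 w) == a) && (alA (hap2 w) == a')) P); last first.
        by move=> w; rewrite /gA xpair_eqE.
      by rewrite (Pr_hwe HW (fun h => alA h == a) (fun h => alA h == a')) hmA mulrC.
    have hX : Pr P (fun w => (gA w == (a,a')) && ((gM w).2 == al1)) = F a' * fA a.
      rewrite (Pr_ext (F := fun w => (alA (hap1 w) == a) && ((alA (hap2 w) == a') && (alM (hap2 w) == al1))) P); last first.
        by move=> w; rewrite /gA /gM xpair_eqE /=; bcase.
      by rewrite (Pr_hwe HW (fun h => (alA h == a)) (fun h => (alA h == a') && (alM h == al1))) hmF mulrC.
    rewrite -hPA -hX.
    rewrite (Pr_sel P gM (fun w => (gA w == (a,a')) && (gB w == gb)) (fun gm => gm.2 == al1)).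
    rewrite (Pr_sel P gM (fun w => (gA w == (a,a'))) (fun gm => gm.2 == al1)).
    rewrite mulr_suml mulr_sumr; apply: eq_bigr => gm _; exact: HLE.
  - exact: fApos.
  - exact: Pr_ge0.
  - by apply: Pr_mono => // w /andP[].
  - by apply: Pr_mono => // w /andP[/andP[_ ->] ->].
  - apply: Pr_mono => // w /andP[/andP[_]].
    by rewrite /gA xpair_eqE => /andP[-> _].
have M1 : Pr P (fun w => isCase w && (alM (hap1 w) == al1)) =
  \sum_a Pr P (fun w => isCase w && (alA (hap1 w) == a)) * (F a / fA a).
  rewrite (Pr_part P (fun w => alA (hap1 w)) (fun w => isCase w && (alM (hap1 w) == al1))).
  apply: eq_bigr => a _.
  rewrite (Pr_part P (fun w => alA (hap2 w)) _) [in RHS](Pr_part P (fun w => alA (hap2 w))) mulr_suml.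
  apply: eq_bigr => a' _.
  rewrite (Pr_part P gB _) [in RHS](Pr_part P gB) mulr_suml; apply: eq_bigr => gb _.
  rewrite [in RHS](Pr_ext (F := fun w => (isCase w == true) && (gA w == (a,a')) && (gB w == gb)) P); last first.
    by move=> w; rewrite /gA xpair_eqE /=; bcase.
  rewrite -(K1 (a,a') gb); apply: Pr_ext => w.
  by rewrite /gA /gM xpair_eqE /=; bcase.
have M2 : Pr P (fun w => isCase w && (alM (hap2 w) == al1)) =
  \sum_a Pr P (fun w => isCase w && (alA (hap2 w) == a)) * (F a / fA a).
  rewrite (Pr_part P (fun w => alA (hap2 w)) (fun w => isCase w && (alM (hap2 w) == al1))).
  apply: eq_bigr => a' _.
  rewrite (Pr_part P (fun w => alA (hap1 w)) _) [in RHS](Pr_part P (fun w => alA (hap1 w))) mulr_suml.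
  apply: eq_bigr => a _.
  rewrite (Pr_part P gB _) [in RHS](Pr_part P gB) mulr_suml; apply: eq_bigr => gb _.
  rewrite [in RHS](Pr_ext (F := fun w => (isCase w == true) && (gA w == (a,a')) && (gB w == gb)) P); last first.
    by move=> w; rewrite /gA xpair_eqE /=; bcase.
  rewrite -(K2 (a,a') gb); apply: Pr_ext => w.
  by rewrite /gA /gM xpair_eqE /=; bcase.
pose c1 (a : allele) := Pr P (fun w => isCase w && (alA (hap1 w) == a)).
pose c2 (a : allele) := Pr P (fun w => isCase w && (alA (hap2 w) == a)).
pose pc := Pr P isCase.
pose Q := Pr P (fun w => alM (hap1 w) == al1).
have csum1 : c1 al1 + c1 al2 = pc.
  by rewrite /pc (Pr_part P (fun w => alA (hap1 w)) isCase) sum_allele.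
have csum2 : c2 al1 + c2 al2 = pc.
  by rewrite /pc (Pr_part P (fun w => alA (hap2 w)) isCase) sum_allele.
have Qsum : F al1 + F al2 = Q.
  rewrite /Q (Pr_part P (fun w => alA (hap1 w)) _) sum_allele.
  by congr (_ + _); apply: Pr_ext => w; rewrite andbC.
have Q2 : Pr P (fun w => alM (hap2 w) == al1) = Q.
  by rewrite /Q (Pr_marg HI (fun h => alM h == al1)).
have hU : forall X : pred indiv, Pr P (fun w => (predC isCase) w && X w) = Pr P X - Pr P (fun w => isCase w && X w).
  move=> X; rewrite (Pr_split P X isCase).
  have -> : Pr P (fun w => isCase w && X w) = Pr P (fun w => X w && isCase w).
    by apply: Pr_ext => w; rewrite andbC.
  rewrite [X in X - _]addrC addrK; apply: Pr_ext => w /=; by rewrite andbC.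
have hUt : Pr P (predC isCase) = 1 - pc.
  rewrite -Ptot (Pr_split P predT isCase) /pc.
  rewrite (Pr_ext (E := fun w => predT w && isCase w) (F := isCase) P) //.
  rewrite [X in X - _]addrC addrK; by apply: Pr_ext.
have eq1 : q1 = Q.
  rewrite /q1 afreq Ptot (Pr_ext (E := fun w => predT w && (alM (hap1 w) == al1)) (F := fun w => alM (hap1 w) == al1) P) //.
  rewrite (Pr_ext (E := fun w => predT w && (alM (hap2 w) == al1)) (F := fun w => alM (hap2 w) == al1) P) // Q2.
  rewrite divr1 /Q; field. by [].
have ep1A : p1A = (c1 al1 + c2 al1) / 2 / pc by rewrite /p1A afreq.
have ep1U : p1U = ((fA al1 - c1 al1) + (fA al1 - c2 al1)) / 2 / (1 - pc).
  by rewrite /p1U afreq !hU hUt hmA.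
have eq1A : q1A = ((c1 al1 * (F al1 / fA al1) + c1 al2 * (F al2 / fA al2))
                  + (c2 al1 * (F al1 / fA al1) + c2 al2 * (F al2 / fA al2))) / 2 / pc.
  by rewrite /q1A afreq M1 M2 !sum_allele.
have eq1U : q1U = ((Q - (c1 al1 * (F al1 / fA al1) + c1 al2 * (F al2 / fA al2)))
                  + (Q - (c2 al1 * (F al1 / fA al1) + c2 al2 * (F al2 / fA al2)))) / 2 / (1 - pc).
  by rewrite /q1U afreq !hU hUt M1 M2 !sum_allele Q2.
have eD : hapAM_freq P al1 al1 = F al1.
  rewrite /hapAM_freq hmF /F; field. by [].
have key : q1U - q1A = D11 / (p1 * p2) * (p1U - p1A).
  have e1 : c1 al2 = pc - c1 al1 by rewrite -csum1; ring.
  have e2 : c2 al2 = pc - c2 al1 by rewrite -csum2; ring.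
  have eF : F al2 = Q - F al1 by rewrite -Qsum; ring.
  have eA : fA al2 = 1 - fA al1 by rewrite -fAsum; ring.
  move: hp1; rewrite ep1 => /andP[h0 h1].
  have n1 : fA al1 != 0 by rewrite gt_eqF.
  have n2 : 1 - fA al1 != 0 by rewrite gt_eqF // subr_gt0.
  have n3 : pc != 0 by rewrite gt_eqF.
  have n4 : 1 - pc != 0 by rewrite gt_eqF // subr_gt0.
  rewrite /D11 /p2 eD eq1 ep1 ep1A ep1U eq1A eq1U e1 e2 eF eA.
  field; rewrite ?n1 ?n2 ?n3 ?n4 //.
move: hp1 hq1 => /andP[a0 a1] /andP[b0 b1].
have pp : 0 < p1 * p2 by rewrite mulr_gt0 // subr_gt0.
have qq : 0 < q1 * q2 by rewrite mulr_gt0 // subr_gt0.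
rewrite /Delta key.
have -> : p1 * p2 * q1 * q2 = (p1 * p2) * (q1 * q2) by ring.
rewrite (sqrtrM _ (ltW pp)).
have sp2 := sqr_sqrtr (ltW pp).
have spn : Num.sqrt (p1 * p2) != 0 by rewrite gt_eqF // sqrtr_gt0.
have sqn : Num.sqrt (q1 * q2) != 0 by rewrite gt_eqF // sqrtr_gt0.
move: sp2 spn sqn.
set sp := Num.sqrt (p1 * p2); set sq := Num.sqrt (q1 * q2) => sp2 spn sqn.
rewrite -sp2; field; by rewrite spn sqn.
Qed.
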